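(* Let $G$ be a finite $p$-group with Frattini subgroup $\Phi(G)$, let $d\ge 1$ and let $w\in F_d$ be a word whose word map $\tilde w:G^d\to G$ is not surjective. Then $w(G)\subseteq \Phi(G)$.
   Context: $F_d$ is the free group on $d$ letters. For $w\in F_d$ and a group $G$, the word map $\tilde w:G^d\to G$ is evaluation of $w$ on $d$-tuples, and $w(G)$ denotes its image. *)

(* Defs.v *)
From mathcomp Require Import all_boot all_fingroup all_solvable.
Set Implicit Arguments. Unset Strict Implicit. Unset Printing Implicit Defensive.
Import GroupScope.

(* Elements of the free group F_d, represented by group terms in the
   d letters x_0, ..., x_{d-1}.  Every element of F_d is represented by
   such a term and the word map only depends on the represented element. *)
Inductive word (d : nat) : Type :=
  | WVar of 'I_d
  | WOne
  | WMul of word d & word d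
  | WInv of word d.

Fixpoint eval_word (gT : finGroupType) (d : nat) (x : 'I_d -> gT) (w : word d)
  : gT :=
  match w with
  | WVar i => x i
  | WOne => 1
  | WMul u v => eval_word x u * eval_word x v
  | WInv u => (eval_word x u)^-1
  end.

Definition word_image (gT : finGroupType) (d : nat) (G : {set gT}) (w : word d)
  : {set gT} :=
  [set g | [exists x : {ffun 'I_d -> gT},
              [forall i, x i \in G] && (g == eval_word x w)]].

Definition word_map_surjective (gT : finGroupType) (d : nat) (G : {set gT})
  (w : word d) : Prop := G \subset word_image G w.

(* Main.v *)
Require Import Defs.
From mathcomp Require Import all_boot all_fingroup all_solvable.
Import GroupScope.

Fixpoint ex (n : nat) {d : nat} (i : 'I_d) (w : word d) : nat :=
  match w with
  | WVar j => nat_of_bool (j == i)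
  | WOne => 0
  | WMul u v => ex n i u + ex n i v
  | WInv u => n - ex n i u %% n
  end.

Lemma eval_in (gT : finGroupType) (G : {group gT}) d (x : 'I_d -> gT) w :
  (forall i, x i \in G) -> eval_word x w \in G.
Proof.
move=> Hx; elim: w => [j||u IHu v IHv|u IHu] /=; [exact: Hx|exact: group1|exact: groupM|by rewrite groupV].
Qed.

Lemma eval_ext (gT : finGroupType) d (x y : 'I_d -> gT) w :
  (forall j, x j = y j) -> eval_word x w = eval_word y w.
Proof. by move=> e; elim: w => [j||u /= -> v ->|u /= ->] /=. Qed.

Lemma inv_pow (gT : finGroupType) (h : gT) n a :
  0 < n -> h ^+ n = 1 -> (h ^+ a)^-1 = h ^+ (n - a %% n).
Proof.
move=> n0 hn; rewrite -(expg_mod a hn).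
have lt: a %% n <= n by apply: ltnW; rewrite ltn_mod.
apply: (mulgI (h ^+ (a %% n))); rewrite mulgV -expgD addnC subnK //.
Qed.

Lemma eval_single (gT : finGroupType) n d (i : 'I_d) (h : gT) w :
  0 < n -> h ^+ n = 1 ->
  eval_word (fun j => if j == i then h else 1) w = h ^+ ex n i w.
Proof.
move=> n0 hn; elim: w => [j||u IHu v IHv|u IHu] /=.
- by case: (j == i); rewrite ?expg1 ?expg0.
- by rewrite expg0.
- by rewrite IHu IHv expgD.
- by rewrite IHu (inv_pow _ _ _ _ n0 hn).
Qed.

Lemma eval_split (gT rT : finGroupType) (G : {group gT}) (H : {set rT})
  (f : gT -> rT) n d (i : 'I_d) (x : 'I_d -> gT) w :
  (forall y z, y \in G -> z \in G -> f (y * z) = f y * f z) ->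
  (forall y, y \in G -> f y^-1 = (f y)^-1) ->
  f 1 = 1 ->
  (forall y, y \in G -> f y \in H) -> abelian H ->
  0 < n -> (forall y, y \in G -> (f y) ^+ n = 1) ->
  (forall j, x j \in G) ->
  f (eval_word x w) =
  f (eval_word (fun j => if j == i then 1 else x j) w) * (f (x i)) ^+ ex n i w.
Proof.
move=> fM fV f1 fH abH n0 fn Hx.
have Hx' : forall j, (fun j => if j == i then 1 else x j) j \in G.
  by move=> j /=; case: (j == i); rewrite ?group1.
have cm : forall y z, y \in G -> z \in G -> commute (f y) (f z).
  by move=> y z yG zG; apply: (centsP abH); apply: fH.
elim: w => [j||u IHu v IHv|u IHu] /=.
- case: eqP => [->|_]; first by rewrite f1 mul1g expg1.
  by rewrite ?expg0 mulg1.
- by rewrite ?expg0 mulg1.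
- rewrite !fM ?eval_in // IHu IHv expgD.
  have c := commuteX (ex n i u) (cm _ _ (eval_in _ _ _ _ v Hx') (Hx i)).
  by rewrite !mulgA -(mulgA _ _ (f _)) -c !mulgA.
- rewrite !fV ?eval_in // IHu invMg (inv_pow _ _ _ _ n0 (fn _ (Hx i))).
  apply: commuteV; apply: commute_sym; apply: commuteX; apply: cm => //.
  exact: eval_in.
Qed.

Theorem lemma3p1 (gT : finGroupType) (G : {group gT}) (p : nat) (d : nat)
  (w : word d) :
  prime p -> p.-group G -> (1 <= d)%N ->
  ~ word_map_surjective G w ->
  word_image G w \subset 'Phi(G).
Proof.
move=> pp pG _ nsurj.
set n := #|G|.
have n0 : 0 < n by rewrite /n cardG_gt0.
have [k nk] := p_natP pG.
case: (boolP [forall i : 'I_d, p %| ex n i w]) => [/forallP allp | /forallPn [i npi]].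
- apply/subsetP => g; rewrite inE => /existsP [x /andP [/forallP xG /eqP ->]].
  have nPhi : G \subset 'N('Phi(G)) := normal_norm (Phi_normal G).
  have [abQ expQ] := abelemP pp (Phi_quotient_abelem pG).
  set f := coset 'Phi(G).
  have yN : forall y, y \in G -> y \in 'N('Phi(G)) by move=> y yG; apply: (subsetP nPhi).
  have fM : forall y z, y \in G -> z \in G -> f (y * z) = f y * f z.
    by move=> y z yG zG; rewrite /f morphM ?yN.
  have fV : forall y, y \in G -> f y^-1 = (f y)^-1.
    by move=> y yG; rewrite /f morphV ?yN.
  have f1 : f 1 = 1 by rewrite /f morph1.
  have fH : forall y, y \in G -> f y \in G / 'Phi(G) by move=> y yG; apply: mem_quotient.
  have fn : forall y, y \in G -> (f y) ^+ n = 1.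
    by move=> y yG; rewrite /f -morphX ?yN // expg_cardG // morph1.
  apply: coset_idr; first by apply: yN; apply: eval_in.
  suff: forall m (y : 'I_d -> gT), (forall j, y j \in G) ->
      (forall j : 'I_d, m <= j -> y j = 1) -> f (eval_word y w) = 1.
    by move=> /(_ d x xG) H; apply: H => j; rewrite leqNgt ltn_ord.
  elim=> [|m IH] y yG y1.
  + have -> : eval_word y w = eval_word (fun _ => 1) w.
      by apply: eval_ext => j; apply: y1.
    suff -> : eval_word (fun _ : 'I_d => (1 : gT)) w = 1 by [].
    by elim: w {allp nsurj} => //= [u -> v ->|u ->]; rewrite ?mulg1 ?invg1.
  + case: (ltnP m d) => md; last first.
      apply: IH => // j mj; have := ltn_ord j; by rewrite ltnNge (leq_trans md mj).
    pose i := Ordinal md.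
    rewrite (eval_split _ _ _ _ _ _ _ i y w fM fV f1 fH abQ n0 fn yG).
    rewrite IH; last first.
    * move=> j mj; case: eqP => // /eqP ji; apply: y1.
      by rewrite ltn_neqAle mj andbT eq_sym.
    * by move=> j; case: (j == i); rewrite ?group1.
    have [q ->] := dvdnP (allp i).
    by rewrite mul1g mulnC expgM expQ ?expg1n // fH.
- exfalso; apply: nsurj; apply/subsetP => g gG.
  set e := ex n i w.
  have cop : coprime n e.
    by rewrite /n nk coprimeXl // prime_coprime.
  set h := g ^+ expg_invn G e.
  have hG : h \in G by rewrite groupX.
  rewrite inE; apply/existsP; exists [ffun j => if j == i then h else 1].
  apply/andP; split.
    by apply/forallP => j; rewrite ffunE; case: (j == i); rewrite ?group1.
  have -> : eval_word [ffun j => if j == i then h else 1] w =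
            eval_word (fun j => if j == i then h else 1) w.
    by apply: eval_ext => j; rewrite ffunE.
  rewrite (eval_single _ _ _ i h w n0 (expg_cardG hG)) /h expgAC.
  by rewrite (expgK cop gG).
Qed.
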